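(* For any real numbers $t\ge1$ and $\varepsilon>0$, let $c=t-\lfloor t\rfloor$. There exists an indivisible-goods instance in which no allocation $A$ (i.e., no set of goods of size at most $\alpha$) gives every $t$-cohesive group an average satisfaction of at least $t-1+\frac{c(1-c)}{t}+\varepsilon$; that is, for every allocation some $t$-cohesive group has average satisfaction less than this value.
   Context: Model: There is a set of agents $N=\{1,\dots,n\}$. The resource consists of indivisible goods $G=\{g_1,\dots,g_m\}$ (no cake). Each agent $i$ approves a set $G_i\subseteq G$, and her utility for a set $A\subseteq G$ is $u_i(A)=|G_i\cap A|$. A parameter $\alpha\in(0,m]$ is given; an allocation is a set $A\subseteq G$ with $|A|\le\alpha$. For a real $t>0$, $N^*\subseteq N$ is $t$-cohesive if $|N^*|\ge t n/\alpha$ and $|\bigcap_{i\in N^*}G_i|\ge t$. The average satisfaction of a group $N'\subseteq N$ with respect to $A$ is $\frac1{|N'|}\sum_{i\in N'}u_i(A)$. *)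

(* Defs.v *)
From HB Require Import structures.
From mathcomp Require Import all_boot all_order all_algebra.
From mathcomp Require Import reals.
Set Implicit Arguments. Unset Strict Implicit. Unset Printing Implicit Defensive.
Import Order.TTheory GRing.Theory Num.Theory.
Local Open Scope ring_scope.

(* Agents are 'I_n, goods are 'I_m; agent i approves the set G i of goods. *)

Definition utility (n m : nat) (G : 'I_n -> {set 'I_m}) (i : 'I_n)
  (A : {set 'I_m}) : nat := #|G i :&: A|.

Definition is_allocation {R : realType} (m : nat) (alpha : R)
  (A : {set 'I_m}) : Prop := (#|A|%:R <= alpha).

Definition cohesive {R : realType} (n m : nat) (G : 'I_n -> {set 'I_m})
  (alpha t : R) (S : {set 'I_n}) : Prop :=
  t * n%:R / alpha <= #|S|%:R /\ t <= #|\bigcap_(i in S) G i|%:R.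

Definition avg_sat {R : realType} (n m : nat) (G : 'I_n -> {set 'I_m})
  (A : {set 'I_m}) (S : {set 'I_n}) : R :=
  (\sum_(i in S) (utility G i A)%:R) / #|S|%:R.

(* Main.v *)
Require Import Defs.
From HB Require Import structures.
From mathcomp Require Import all_boot all_order all_algebra.
From mathcomp Require Import reals.
From mathcomp Require Import ring lra.
Import Order.TTheory GRing.Theory Num.Theory.
Set Implicit Arguments. Unset Strict Implicit. Unset Printing Implicit Defensive.

Section Comb.
Variables (k x y : nat).
Hypothesis ypos : 0 < y.
Local Notation n := (x + k.+1 * y).
Local Notation m := (k.+1 * k.+1).

Definition ty (i : nat) : nat := if i < x then k.+1 else (i - x) %/ y.
Definition Ty (j : nat) : {set 'I_n} := [set i : 'I_n | ty i == j].

Lemma lt_aux j (r : 'I_y) : j < k.+1 -> x + j * y + r < n.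
Proof.
move=> hj; rewrite -addnA ltn_add2l.
have : j * y + r < j * y + y by rewrite ltn_add2l ltn_ord.
move/leq_trans; apply; by rewrite -mulSnr leq_mul2r hj orbT.
Qed.

Lemma Ty_card j : j < k.+1 -> #|Ty j| = y.
Proof.
move=> hj.
have -> : Ty j = [set Ordinal (lt_aux r hj) | r : 'I_y].
  apply/setP => i; rewrite inE; apply/idP/imsetP.
  - rewrite /ty; case: ifP => hix.
      by move/eqP => e; exfalso; move: (hj); rewrite -e ltnn.
    move/eqP => e; exists (Ordinal (ltn_pmod (i - x) ypos)) => //.
    apply: val_inj => /=.
    rewrite -e -addnA -divn_eq; apply/esym/subnKC; by rewrite leqNgt hix.
  - case=> r _ -> /=; rewrite /ty /= ifF; last first.
      by apply/negbTE; rewrite -leqNgt -addnA leq_addr.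
    by rewrite -addnA addKn divnMDl // divn_small // addn0.
rewrite card_imset ?card_ord //.
by move=> r1 r2 /(congr1 val) /= /addnI /val_inj.
Qed.


Definition Gs (i : 'I_n) : {set 'I_m} := [set g : 'I_m | ty i != g %/ k.+1].
Definition Sj (j : nat) : {set 'I_n} := ~: Ty j.

Lemma grp_lt (g : 'I_m) : g %/ k.+1 < k.+1.
Proof. by rewrite ltn_divLR // ltn_ord. Qed.

Lemma Sj_card j : j < k.+1 -> #|Sj j| = n - y.
Proof.
move=> hj; have := cardsC (Ty j); rewrite Ty_card // => e.
by rewrite /Sj -[in RHS](card_ord n) -e addKn.
Qed.

Lemma lt_aux2 j (r : 'I_k.+1) : j < k.+1 -> j * k.+1 + r < m.
Proof.
move=> hj.
have : j * k.+1 + r < j * k.+1 + k.+1 by rewrite ltn_add2l ltn_ord.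
move/leq_trans; apply; by rewrite -mulSnr leq_mul2r hj orbT.
Qed.

Lemma inter_card j (hj : j < k.+1) : k.+1 <= #|\bigcap_(i in Sj j) Gs i|.
Proof.
have hc : #|[set Ordinal (lt_aux2 r hj) | r : 'I_k.+1]| = k.+1.
  rewrite card_imset ?card_ord //.
  by move=> r1 r2 /(congr1 val) /= /addnI /val_inj.
apply: (leq_trans (eq_leq (esym hc))).
apply: subset_leq_card; apply/subsetP => g /imsetP [r _ ->].
apply/bigcapP => i; rewrite /Sj inE inE /Gs inE /=.
by rewrite divnMDl // divn_small // addn0.
Qed.

Lemma pigeon (A : {set 'I_m}) : #|A| <= k ->
  exists2 j, j < k.+1 & forall g, g \in A -> g %/ k.+1 != j.
Proof.
move=> hA.
pose f (g : 'I_m) : 'I_k.+1 := inord (g %/ k.+1).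
case: (pickP (fun j : 'I_k.+1 => j \notin f @: A)) => [j hj | hall].
  exists j => // g gA; apply/eqP => e; move/negP: hj; apply.
  apply/imsetP; exists g => //; apply: val_inj; by rewrite /f /= inordK e.
exfalso.
have : k.+1 <= #|f @: A|.
  rewrite -{1}(card_ord k.+1) -cardsT; apply: subset_leq_card.
  by apply/subsetP => j _; move: (hall j) => /= /negbFE.
move/leq_trans => /(_ _ (leq_imset_card _ _)) /leq_trans /(_ hA).
by rewrite ltnn.
Qed.

Lemma cardI_sum (B A : {set 'I_m}) : #|B :&: A| = \sum_(g in A) (g \in B).
Proof.
rewrite -sum1_card big_mkcond [RHS]big_mkcond /=; apply: eq_bigr => g _.
by rewrite !inE; case: (g \in B); case: (g \in A).
Qed.

Lemma sum_bound j (hj : j < k.+1) (A : {set 'I_m}) :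
  (forall g, g \in A -> g %/ k.+1 != j) ->
  \sum_(i in Sj j) #|Gs i :&: A| <= #|A| * (n - y - y).
Proof.
move=> hA.
under eq_bigr => i _ do rewrite cardI_sum.
rewrite exchange_big /= -sum1_card big_distrl /=.
apply: leq_sum => g gA; rewrite mul1n.
have hp := grp_lt g.
have e : \sum_(i in Sj j) (g \in Gs i) = #|~: (Ty j :|: Ty (g %/ k.+1))|.
  rewrite -sum1_card big_mkcond [RHS]big_mkcond /=; apply: eq_bigr => i _.
  rewrite /Sj /Gs /Ty !inE negb_or.
  by case: (ty i == j); case: (ty i == g %/ k.+1).
rewrite e.
have := cardsC (Ty j :|: Ty (g %/ k.+1)); rewrite (card_ord n).
have := cardsUI (Ty j) (Ty (g %/ k.+1)).
have -> : Ty j :&: Ty (g %/ k.+1) = set0.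
  apply/setP => i; rewrite /Ty !inE.
  case: eqP => // ->; rewrite eq_sym; by move/negbTE: (hA g gA) => ->.
rewrite cards0 addn0 !Ty_card // => e1 e2.
move: e1 e2; move: (#|Ty j :|: Ty (g %/ k.+1)|) (#|~: (Ty j :|: Ty (g %/ k.+1))|).
move=> b a -> e2; rewrite -[in X in _ <= X]e2.
by rewrite -subnDA addKn.
Qed.

End Comb.

Unset Implicit Arguments.
Local Open Scope ring_scope.

Theorem mainTheorem20 (R : realType) (t eps : R) :
  1 <= t -> 0 < eps ->
  let c := t - (Num.floor t)%:~R in
  exists (n m : nat) (G : 'I_n -> {set 'I_m}) (alpha : R),
    (0 < n)%N /\ 0 < alpha /\ alpha <= m%:R /\
    forall A : {set 'I_m}, is_allocation alpha A ->
      exists S : {set 'I_n},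
        cohesive G alpha t S /\
        avg_sat G A S < t - 1 + c * (1 - c) / t + eps.
Proof.
move=> t1 e0 c.
set k := Num.trunc t.
have t0 : 0 <= t by lra.
have /andP [hk1 hk2] := truncn_itv t0.
have hfl : Num.floor t = k%:Z.
  apply: floor_def; rewrite intrD /=.
  have -> : (k%:~R : R) = k%:R by [].
  have -> : (1%:~R : R) = 1 by [].
  by rewrite hk1 /=; move: hk2; rewrite -natr1.
have cE : c = t - k%:R by rewrite /c hfl.
have kpos : (0 < k)%N by rewrite truncn_gt0.
have K1 : 1 <= (k%:R : R) by rewrite ler1n.
have c0 : 0 <= c by rewrite cE; lra.
have c1 : c < 1 by move: hk2; rewrite cE -natr1; lra.
pose y := (Num.trunc (k%:R / eps)).+1.
have hy : k%:R / eps < y%:R by apply: truncnS_gt.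
have ypos : (0 < y)%N by [].
pose x0 := k.+1%:R * c * y%:R / (1 - c).
have x00 : 0 <= x0.
  rewrite /x0 divr_ge0 //; last by lra.
  by rewrite !mulr_ge0.
pose x := (Num.trunc x0).+1.
have hx1 : x0 < x%:R by apply: truncnS_gt.
have hx2 : x%:R <= x0 + 1.
  by rewrite /x -natr1 lerD2r truncn_le.
have hx0 : x0 * (1 - c) = k.+1%:R * c * y%:R.
  rewrite /x0 mulrVK //; apply: unitf_gt0; lra.
have hA : k.+1%:R * c * y%:R < x%:R * (1 - c).
  by rewrite -hx0 ltr_pM2r //; lra.
have hB : x%:R * (1 - c) <= k.+1%:R * c * y%:R + (1 - c).
  have : x%:R * (1 - c) <= (x0 + 1) * (1 - c) by rewrite ler_pM2r //; lra.
  by rewrite mulrDl mul1r hx0.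
have hyE : k%:R < eps * y%:R by rewrite mulrC -ltr_pdivrMr.
have tE : t = k%:R + c by rewrite cE; lra.
have xpos : (0 < x)%N by [].
rewrite -natr1 in hA hB.
clearbody x y; clear hx0 hx1 hx2 x00 x0 hy.
have Spos : 0 < (x + k * y)%:R :> R by rewrite ltr0n addn_gt0 xpos.
have nyE : (x + k.+1 * y - y = x + k * y)%N by rewrite mulSnr addnA addnK.
exists (x + k.+1 * y)%N, (k.+1 * k.+1)%N, (@Gs k x y),
  (t * (x + k.+1 * y)%:R / (x + k * y)%:R).
have alt : t * (x + k.+1 * y)%:R / (x + k * y)%:R < k.+1%:R.
  rewrite ltr_pdivrMr // !natrD !natrM -natr1 tE; lra.
split; first by rewrite addn_gt0 xpos.
split; first by rewrite divr_gt0 // mulr_gt0 //; [lra | rewrite ltr0n addn_gt0 xpos].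
split.
  apply: (le_trans (ltW alt)); rewrite ler_nat; apply: leq_pmulr; by [].
move=> A hAl.
have Ak : (#|A| <= k)%N.
  by rewrite -ltnS -(ltr_nat R); apply: le_lt_trans hAl alt.
have [j hj hjA] := pigeon Ak.
exists (Sj k x y j).
have Scard : #|Sj k x y j| = (x + k * y)%N by rewrite (Sj_card x ypos hj) nyE.
split.
  split.
    rewrite Scard invf_div mulrCA divff ?mulr1 //.
    rewrite mulf_neq0 //; first by apply/eqP; lra.
    by rewrite pnatr_eq0 addn_eq0 negb_and -lt0n xpos.
  apply: (le_trans (ltW hk2)); rewrite ler_nat; exact: (inter_card x y hj).
rewrite /avg_sat Scard /utility -natr_sum.
have hs := sum_bound x ypos hj hjA.
rewrite nyE in hs.
have hs2 : (\sum_(i in Sj k x y j) #|Gs i :&: A| <= k * (x + k * y - y))%N.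
  apply: (leq_trans hs); rewrite leq_mul2r Ak orbT //.
apply: (le_lt_trans (y := (k * (x + k * y - y))%N%:R / (x + k * y)%:R)).
  by rewrite ler_pM2r ?invr_gt0 // ler_nat.
have -> : (x + k * y - y = x + k.-1 * y)%N.
  by rewrite -(prednK kpos) mulSnr addnA addnK.
rewrite ltr_pdivrMr // !natrM !natrD !natrM -subn1 natrB // tE.
rewrite -tE; move: hA hB hyE K1 c0 c1 e0 tE.
move: (k%:R : R) (x%:R : R) (y%:R : R) (ler0n R x) (ler0n R y) => K X Y X0 Y0.
move=> hA hB hyE K1 c0 c1 e0 tE.
have tpos : 0 < t by lra.
have e : t - 1 + c * (1 - c) / t = K - K * (1 - c) / t.
  rewrite tE; field; apply/eqP; lra.
rewrite e.
set D := X + K * Y.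
set q := K * (1 - c) / t.
have hq : q * t = K * (1 - c) by rewrite /q mulfVK ?lt0r_neq0.
have hD : (1 - c) * D <= Y * t + (1 - c) by rewrite /D tE; nra.
have hqD : q * D * t <= K * Y * t + K * t.
  rewrite -mulrA [D * t]mulrC mulrA hq; nra.
have hqD2 : q * D <= K * Y + K.
  rewrite -(ler_pM2r tpos) mulrDl; lra.
have hYD : Y <= D by rewrite /D; nra.
have : K < eps * D by nra.
move=> hK.
have : q * D < K * Y + eps * D by lra.
rewrite /D; lra.
Qed.
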